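(* Fix an integer $L \ge 2$ and a starting state $s_0 \in \{1,\dots,L-1\}$. Consider the one-dimensional gambler's ruin POMDP described in the context, and a policy $\pi_{\vec\theta}$ that does not depend on the state, with $p = \pi(a=+1\mid\vec\theta)$. Then the episodic return $G$ of an on-policy trajectory started at $s_0$ satisfies, for every $g$, \[ \Pr\{G = g\} = \sum_{(s,t)\in C_g} (1-p)^{\,t - r_{s,t}}\, p^{\,r_{s,t}}\, a_{s_0,L}(t, r_{s,t}), \] where $C_g = \{(s,t) : s\in\{0,L\},\ t \ge 1,\ g = \lambda_s - t\}$, $r_{s,t} = \tfrac12 (s - s_0 + t)$ is the number of steps to the right, and $a_{s_0,L}(t,r_{s,t})$, the number of paths from $s_0$ that end on the terminating state $s$ at step $t$ (and not earlier) after taking $r_{s,t}$ steps to the right, is given by \[ a_{s_0,L}(t,r_{s,t}) = \sum_{i=-\infty}^{\infty}\left[\binom{t'}{r' + iL} - \binom{t'}{(r'+s_0) + iL}\right] = \frac{4}{L}\sum_{k=0}^{\lfloor (L-1)/2\rfloor} 2^{t'}\cos^{t'}\!\Big(\frac{\pi k}{L}\Big)\sin\!\Big(\frac{\pi k}{L}s_0\Big)\sin\!\Big(\frac{\pi k}{L}(2r' + s_0 - t')\Big), \] with $t' = t-1$, and $r' = r_{s,t}$ if $s = 0$, $r' = r_{s,t}-1$ if $s = L$. (Terms with $s - s_0 + t$ odd are unreachable and contribute $0$.)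
   Context: The 1D gambler's ruin POMDP has state space $\{0,1,\dots,L\}$, a single starting state $s_0$, two terminating (absorbing) states $0$ and $L$, and two actions $a\in\{-1,+1\}$ which move the agent from state $s$ to $s+a$ deterministically. The agent receives no information about the state (it does not observe $s_0$ or its current state), so its policy is a fixed distribution over $\{-1,+1\}$ parametrized by $\vec\theta$. Rewards are undiscounted: each step costs $-1$, and reaching terminating state $s\in\{0,L\}$ gives a bonus $\lambda_s$, so a trajectory that first reaches terminating state $s$ at step $t$ has return $G = \lambda_s - t$. Binomial coefficients $\binom{n}{k}$ are $0$ when $k<0$ or $k>n$. *)

(* Defs.v *)
From HB Require Import structures.
From mathcomp Require Import all_boot all_order all_algebra.
From mathcomp Require Import all_classical all_reals all_analysis.
Set Implicit Arguments. Unset Strict Implicit. Unset Printing Implicit Defensive.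
Import Order.TTheory GRing.Theory Num.Theory numFieldNormedType.Exports.
Local Open Scope ring_scope.
Local Open Scope classical_set_scope.

(* An action sequence is a [seq bool]: [true] = action +1, [false] = action -1.
   [pos s0 w k] is the state after the first [k] actions of [w] from [s0]. *)
Definition pos (s0 : nat) (w : seq bool) (k : nat) : int :=
  (s0%:Z + (count id (take k w))%:Z - (count negb (take k w))%:Z)%R.

Definition terminal (L : nat) (x : int) : bool := (x == 0) || (x == L%:Z).

Definition first_hit (L s0 : nat) (w : seq bool) : bool :=
  [forall k : 'I_(size w), (0 < k)%N ==>
      ((0 < pos s0 w k) && (pos s0 w k < L%:Z))]
  && terminal L (pos s0 w (size w)).

Definition lam {R : realType} (lam0 lamL : R) (s : int) : R :=
  if s == 0 then lam0 else lamL.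

(* probability of the action prefix w under the state-independent policy
   with p = pi(a = +1) *)
Definition weight {R : realType} (p : R) (w : seq bool) : R :=
  p ^+ count id w * (1 - p) ^+ count negb w.

(* Pr{ the episode terminates at step t and G = g }, G = lambda_s - t *)
Definition prob_term_at {R : realType} (L s0 : nat) (p lam0 lamL g : R)
    (t : nat) : R :=
  \sum_(w : t.-tuple bool |
          first_hit L s0 w && (lam lam0 lamL (pos s0 w t) - t%:R == g))
     weight p w.

Definition a_paths (L s0 t : nat) (r : int) : nat :=
  #|[pred w : t.-tuple bool | ((count id w)%:Z == r) && first_hit L s0 w]|.

Definition Cg {R : realType} (L : nat) (lam0 lamL g : R) : set (nat * nat) :=
  [set st | (st.1 = 0%N \/ st.1 = L) /\ (1 <= st.2)%N /\
            g = lam lam0 lamL st.1%:Z - st.2%:R].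

Definition r_st (s0 s t : nat) : int := ((s%:Z - s0%:Z + t%:Z) %/ 2)%Z.

Definition term {R : realType} (L s0 : nat) (p : R) (st : nat * nat) : R :=
  if odd (st.1 + s0 + st.2) then 0
  else let r := r_st s0 st.1 st.2 in
       (1 - p) ^ (st.2%:Z - r) * p ^ r * (a_paths L s0 st.2 r)%:R.

Definition binz (n : nat) (k : int) : nat :=
  match k with Posz k' => 'C(n, k') | Negz _ => 0%N end.

(* sum_{i = -oo}^{oo} f i = x (symmetric partial sums) *)
Definition zsum_to {R : realType} (f : int -> R) (x : R) : Prop :=
  (fun N : nat => \sum_(i < (2 * N).+1) f (i%:Z - N%:Z)) @ \oo --> x.

Definition r'_st (s0 s t : nat) : int :=
  if s == 0%N then r_st s0 s t else r_st s0 s t - 1.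

Definition binom_term {R : realType} (L s0 t' : nat) (r' : int) (i : int) : R :=
  (binz t' (r' + i * L%:Z))%:R - (binz t' ((r' + s0%:Z) + i * L%:Z))%:R.

Definition trig_sum {R : realType} (L s0 t' : nat) (r' : int) : R :=
  4 / L%:R * \sum_(k < ((L - 1)./2).+1)
     (2 ^+ t' * cos (pi * k%:R / L%:R) ^+ t'
      * sin (pi * k%:R / L%:R * s0%:R)
      * sin (pi * k%:R / L%:R * ((2 * r' + s0%:Z - t'%:Z)%:~R))).

(* Main.v *)
Require Import Defs.
From HB Require Import structures.
From mathcomp Require Import all_boot all_order all_algebra.
From mathcomp Require Import all_classical all_reals all_analysis.
From mathcomp Require Import zify ring lra.
Set Implicit Arguments. Unset Strict Implicit. Unset Printing Implicit Defensive.
Import Order.TTheory GRing.Theory Num.Theory numFieldNormedType.Exports.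
Local Open Scope ring_scope.
Local Open Scope classical_set_scope.

Lemma big_tuple_cons (R : Type) (idx : R) (op : Monoid.com_law idx) n
   (F : n.+1.-tuple bool -> R) :
  \big[op/idx]_(w : n.+1.-tuple bool) F w =
  op (\big[op/idx]_(w : n.-tuple bool) F [tuple of true :: w])
     (\big[op/idx]_(w : n.-tuple bool) F [tuple of false :: w]).
Proof.
rewrite (reindex (fun p : bool * n.-tuple bool => [tuple of p.1 :: p.2])) /=.
  by rewrite -(pair_big xpredT xpredT (fun (b : bool) (w : n.-tuple bool) => F [tuple of b :: w])) /= big_bool.
exists (fun t : n.+1.-tuple bool => (thead t, [tuple of behead t])) => /=.
  by move=> [b w] _ /=; rewrite theadE; congr pair; apply: val_inj.
by move=> t _; rewrite [RHS]tuple_eta.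
Qed.

Lemma posE a (w : seq bool) k : pos a w k =
  (a%:Z + (count id (take k w))%:Z - (count negb (take k w))%:Z)%R.
Proof. by []. Qed.

Lemma pos0 a w : pos a w 0 = a%:Z.
Proof. by rewrite /pos take0 /= subr0 addr0. Qed.

Lemma pos_true a w k : pos a (true :: w) k.+1 = pos a.+1 w k.
Proof. rewrite /pos /= -addn1 PoszD; lia. Qed.

Lemma pos_false a w k : pos a.+1 (false :: w) k.+1 = pos a w k.
Proof. rewrite /pos /= -(addn1 a) PoszD; lia. Qed.

Definition intr (L : nat) (x : int) : bool := (0 < x) && (x < L%:Z).

Lemma first_hitE L a (w : seq bool) : first_hit L a w =
  all (fun k => (0 < k)%N ==> intr L (pos a w k)) (iota 0 (size w))
  && terminal L (pos a w (size w)).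
Proof.
rewrite /first_hit; congr andb.
apply/forallP/allP => [H k|H k].
  by rewrite mem_iota add0n => /andP[_ kn]; exact: (H (Ordinal kn)).
by apply: H; rewrite mem_iota add0n ltn_ord.
Qed.

Lemma all_iotaS (P : nat -> bool) m :
  all P (iota 0 m.+1) = P 0%N && all (fun k => P k.+1) (iota 0 m).
Proof. by rewrite /= (_ : iota 1 m = map S (iota 0 m)) ?all_map // -(iotaDl 1). Qed.

Lemma all_iota1 (P : nat -> bool) m :
  all P (iota 1 m) = all (fun k => P k.+1) (iota 0 m).
Proof. by rewrite (_ : iota 1 m = map S (iota 0 m)) ?all_map // -(iotaDl 1). Qed.

Lemma first_hit_true L a (w : seq bool) : first_hit L a (true :: w) =
  if w is [::] then terminal L a.+1%:Z
  else intr L a.+1%:Z && first_hit L a.+1 w.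
Proof.
rewrite !first_hitE /= all_iota1 pos_true.
under eq_all do rewrite pos_true /=.
case: w => [|b w]; first by rewrite /= pos0.
by rewrite [size _]/= all_iotaS pos0 /= andbA all_iota1.
Qed.

Lemma first_hit_false L a (w : seq bool) : first_hit L a.+1 (false :: w) =
  if w is [::] then terminal L a%:Z
  else intr L a%:Z && first_hit L a w.
Proof.
rewrite !first_hitE /= all_iota1 pos_false.
under eq_all do rewrite pos_false /=.
case: w => [|b w]; first by rewrite /= pos0.
by rewrite [size _]/= all_iotaS pos0 /= andbA all_iota1.
Qed.

Definition hc (L : nat) (s : int) (n a : nat) : nat :=
  (\sum_(w : n.-tuple bool) (first_hit L a w && (pos a w n == s)))%N.

Definition hc' L s n (a : nat) : nat := if intr L a%:Z then hc L s n a else 0%N.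

Lemma if_cons_nonempty (T A : Type) (w : seq T) n (X Y : A) :
  size w = n.+1 -> (if w is [::] then X else Y) = Y.
Proof. by case: w. Qed.

Lemma hc_rec L s n a : hc L s n.+2 a.+1 = (hc' L s n.+1 a.+2 + hc' L s n.+1 a)%N.
Proof.
rewrite /hc big_tuple_cons /=; congr (_ + _)%N.
  under eq_bigr => w _ do
    rewrite first_hit_true (if_cons_nonempty _ _ (size_tuple w)) pos_true -andbA.
  rewrite /hc'; case: (intr _ _) => //=; by rewrite big1.
under eq_bigr => w _ do
  rewrite first_hit_false (if_cons_nonempty _ _ (size_tuple w)) pos_false -andbA.
rewrite /hc'; case: (intr _ _) => //=; by rewrite big1.
Qed.

Lemma big_tuple0 (R : Type) (idx : R) (op : Monoid.com_law idx)
   (F : 0.-tuple bool -> R) :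
  \big[op/idx]_(w : 0.-tuple bool) F w = F [tuple].
Proof. rewrite (big_pred1 [tuple]) // => w /=; apply/esym/eqP/val_inj => /=; exact: size0nil (size_tuple w). Qed.

Lemma hc1 L s a : terminal L s ->
  hc L s 1 a.+1 = ((a.+2%:Z == s) + (a%:Z == s))%N.
Proof.
move=> ts; rewrite /hc big_tuple_cons !big_tuple0 /=.
rewrite first_hit_true first_hit_false pos_true pos_false !pos0.
by congr (_ + _)%N; case: eqP => [->|]; rewrite ?ts ?andbF.
Qed.

Lemma hc_sol (R : numDomainType) L s (X : nat -> int -> R) N :
  (forall a : nat, (0 < a < L)%N -> X 0%N a%:Z = (hc L s 1 a)%:R) ->
  (forall n, (n < N)%N -> X n 0 = 0 /\ X n L%:Z = 0) ->
  (forall n (a : int), X n.+1 a = X n (a + 1) + X n (a - 1)) ->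
  forall n, (n <= N)%N -> forall a : nat, (0 < a < L)%N ->
  (hc L s n.+1 a)%:R = X n a%:Z.
Proof.
move=> H0 Hb Hr; elim=> [|n IH] nN a aL; first by rewrite H0.
case: a aL => [|a] aL; first by case/andP: aL.
have hb : forall b : nat, (b <= L)%N -> (hc' L s n.+1 b)%:R = X n b%:Z.
  move=> b bL; rewrite /hc' /intr; case: ifP => [/andP[b0 bL']|hb].
    apply: IH; [exact: ltnW | apply/andP; split; lia].
  have [->|bL'] := eqVneq b L; first by rewrite (proj2 (Hb _ nN)).
  have -> : b = 0%N by move: hb bL bL'; lia.
  by rewrite (proj1 (Hb _ nN)).
rewrite hc_rec natrD Hr !hb; try lia.
congr (X n _ + X n _); lia.
Qed.

Lemma hc1_e L s (e : nat) a : (2 <= L)%N -> (0 < a < L)%N ->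
  (s = 0 /\ e = 1%N \/ s = L%:Z /\ e = L.-1) ->
  hc L s 1 a = (a == e).
Proof.
move=> L2 aL hs; case: a aL => [|a] aL; first by case/andP: aL.
have ts : terminal L s by case: hs => -[-> _]; rewrite /terminal eqxx ?orbT.
rewrite hc1 //; case: hs => -[-> ->].
  case: a aL => [|a] aL //=.
  by rewrite /= !eqz_nat /=; case: eqP => //; lia.
Qed.

Lemma natzR (R : pzRingType) (n : nat) : ((n%:Z)%:~R : R) = n%:R.
Proof. by rewrite -pmulrn. Qed.

Lemma sin_natpi (R : realType) (k : nat) : sin (pi * k%:R) = 0 :> R.
Proof.
elim: k => [|k IH]; first by rewrite mulr0 sin0.
by rewrite -natr1 mulrDr mulr1 sinDpi IH oppr0.
Qed.

Lemma cos_natpi (R : realType) (k : nat) : cos (pi * k%:R) = (-1) ^+ k :> R.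
Proof.
elim: k => [|k IH]; first by rewrite mulr0 cos0.
by rewrite -natr1 mulrDr mulr1 cosDpi IH exprS mulN1r.
Qed.

Lemma dirichlet (R : realType) (x : R) M :
  2 * sin (x / 2) * \sum_(k < M.+1) cos (k%:R * x) =
  sin ((M%:R + 2^-1) * x) + sin (x / 2).
Proof.
elim: M => [|M IH].
  rewrite big_ord1 /= mul0r cos0 mulr1 add0r.
  rewrite (_ : 2^-1 * x = x / 2); last by rewrite mulrC.
  by rewrite mulr2n mulrDl mul1r.
rewrite big_ord_recr /= mulrDr IH.
set y := M.+1%:R * x; set h := x / 2.
have -> : sin ((M%:R + 2^-1) * x) = sin (y - h).
  by congr sin; rewrite /y /h -natr1; field.
have -> : sin ((M.+1%:R + 2^-1) * x) = sin (y + h).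
  by congr sin; rewrite /y /h; field.
rewrite !sinD cosN sinN; ring.
Qed.

Lemma Csum (R : realType) (L m : nat) : (0 < m < 2 * L)%N ->
  \sum_(k < L) cos (k%:R * (pi * m%:R / L%:R)) = (1 - (-1) ^+ m) / 2 :> R.
Proof.
case: L => [|L']; first by lia.
move=> hm; set L := L'.+1.
set x := pi * m%:R / L%:R.
have L0 : (L%:R : R) != 0 by rewrite pnatr_eq0.
have sx : 0 < sin (x / 2).
  apply: sin_gt0_pi.
  have q0 : 0 < m%:R / (2 * L%:R) :> R.
    by apply: divr_gt0; rewrite ?mulr_gt0 ?ltr0n //; lia.
  have q1 : m%:R / (2 * L%:R) < 1 :> R.
    rewrite ltr_pdivrMr; last by rewrite mulr_gt0 ?ltr0n.
    by rewrite mul1r -natrM ltr_nat; lia.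
  have -> : x / 2 = pi * (m%:R / (2 * L%:R)) by rewrite /x; field.
  apply/andP; split; first by rewrite mulr_gt0 ?pi_gt0.
  by rewrite -[ltRHS]mulr1 ltr_pM2l ?pi_gt0.
have D := dirichlet x L'.
have E : (L'%:R + 2^-1) * x = pi * m%:R - x / 2.
  by rewrite /x /L -natr1; field.
move: D; rewrite E; rewrite sinB sin_natpi cos_natpi mul0r sub0r.
move=> D; apply: (mulfI (lt0r_neq0 sx)).
apply: (mulfI (_ : (2 : R) != 0)); first by rewrite pnatr_eq0.
rewrite mulrA D; field; lra.
Qed.

Lemma Csum0 (R : realType) (L : nat) :
  \sum_(k < L) cos (k%:R * 0) = L%:R :> R.
Proof.
under eq_bigr do rewrite mulr0 cos0.
by rewrite sumr_const card_ord.
Qed.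

Lemma sign2 (R : pzRingType) (n : nat) : (-1) ^+ (n.*2) = 1 :> R.
Proof. by rewrite -signr_odd odd_double. Qed.

Lemma argB (R : realType) (L a e j : nat) : (e <= a)%N -> (L%:R : R) != 0 ->
  pi * j%:R / L%:R * a%:R - pi * j%:R / L%:R * e%:R
    = j%:R * (pi * (a - e)%:R / L%:R) :> R.
Proof. by move=> ea L0; rewrite natrB //; field. Qed.

Lemma argD (R : realType) (L a e j : nat) : (L%:R : R) != 0 ->
  pi * j%:R / L%:R * a%:R + pi * j%:R / L%:R * e%:R
    = j%:R * (pi * (a + e)%:R / L%:R) :> R.
Proof. by move=> L0; rewrite natrD; field. Qed.

Lemma orth (R : realType) (L a e : nat) : (0 < a < L)%N -> (0 < e < L)%N ->
  \sum_(k < L) sin (pi * k%:R / L%:R * a%:R) * sin (pi * k%:R / L%:R * e%:R)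
  = (a == e)%:R * L%:R / 2 :> R.
Proof.
wlog ea : a e / (e <= a)%N.
  move=> H ha he; case: (leqP e a) => ea; first exact: H.
  rewrite eq_sym; under eq_bigr do rewrite mulrC.
  by apply: H => //; lia.
move=> ha he.
have ps : forall u v : R, sin u * sin v = (cos (u - v) - cos (u + v)) / 2.
  by move=> u v; rewrite cosB cosD; field.
under eq_bigr do rewrite ps.
rewrite -big_distrl /= sumrB.
have L0 : (L%:R : R) != 0 by rewrite pnatr_eq0; lia.
under eq_bigr => k _ do rewrite (@argB R L a e k ea L0).
under [X in _ - X]eq_bigr => k _ do rewrite (@argD R L a e k L0).
rewrite [X in _ - X]Csum; last by lia.
case: eqP => [<-|ne].
  rewrite subnn mulr0 mul0r.
  under eq_bigr do rewrite mulr0 cos0.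
  rewrite sumr_const card_ord addnn sign2 subrr mul0r subr0.
  by rewrite mulr1n mul1r.
rewrite Csum; last by lia.
have -> : ((-1) ^+ (a + e) : R) = (-1) ^+ (a - e).
  rewrite (_ : (a + e = (a - e) + e.*2)%N); last by lia.
  by rewrite exprD sign2 mulr1.
by rewrite subrr !mul0r.
Qed.

Lemma half_sum (R : ringType) (T : nat -> R) (L : nat) : (0 < L)%N ->
  T 0%N = 0 -> (forall k, (0 < k < L)%N -> T (L - k)%N = T k) ->
  (~~ odd L -> T L./2 = 0) ->
  \sum_(k < L) T k = 2 * \sum_(k < ((L - 1)./2).+1) T k.
Proof.
move=> L0 T0 Ts Tm; set m := (L - 1)./2.
have hmE : (L - 1)%N = (odd (L - 1) + m.*2)%N by rewrite odd_double_half.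
have hodd : odd L = ~~ odd (L - 1).
  by case: L L0 {m hmE Ts Tm} => // L; rewrite /= subn1 /= ?negbK.
have hm : (m.*2 <= L - 1 <= m.*2 + 1)%N.
  by rewrite [in X in (_ <= X <= _)%N]hmE; case: (odd _) => /=; lia.
clearbody m.
have sec : \sum_(i < m) T (L - i.+1)%N = \sum_(i < m) T i.+1.
  apply: eq_bigr => i _; have := ltn_ord i; move=> hi.
  rewrite -(Ts i.+1) //; lia.
have fst : \sum_(k < m.+1) T k = \sum_(i < m) T i.+1.
  by rewrite big_ord_recl /= T0 add0r.
case oL: (odd L).
  have HL : L = (m.+1 + m)%N.
    by move: oL hmE; rewrite hodd; case: (odd (L - 1)) => //= _; lia.
  rewrite -(big_mkord xpredT) {1}HL big_mkord big_split_ord /=.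
  rewrite [X in _ + X = _](_ : _ = \sum_(i < m) T (L - i.+1)%N).
    by rewrite sec fst mulr2n mulrDl mul1r.
  rewrite (reindex_inj rev_ord_inj); apply: eq_bigr => i _ /=.
  by congr T; move: (ltn_ord i); lia.
have HL : L = (m.+1 + m.+1)%N.
  by move: oL hmE; rewrite hodd; case: (odd (L - 1)) => //= _; lia.
have sec2 : \sum_(i < m.+1) T (m.+1 + i)%N = \sum_(i < m) T (L - i.+1)%N.
  rewrite big_ord_recl /= addn0.
  have -> : T m.+1 = 0.
    by rewrite (_ : m.+1 = L./2) ?Tm ?oL // HL addnn doubleK.
  rewrite add0r (reindex_inj rev_ord_inj); apply: eq_bigr => i _ /=.
  by rewrite /bump leq0n add1n; congr T; move: (ltn_ord i); lia.
rewrite -(big_mkord xpredT) {1}HL big_mkord big_split_ord /= sec2 sec fst.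
by rewrite mulr2n mulrDl mul1r.
Qed.

Definition Ftrig (R : realType) (L e n : nat) (a : int) : R :=
  2 / L%:R * \sum_(k < L) (2 ^+ n * cos (pi * k%:R / L%:R) ^+ n
      * sin (pi * k%:R / L%:R * a%:~R) * sin (pi * k%:R / L%:R * e%:R)).

Lemma Ftrig_rec (R : realType) L e n a :
  Ftrig R L e n.+1 a = Ftrig R L e n (a + 1) + Ftrig R L e n (a - 1).
Proof.
rewrite /Ftrig -mulrDr -big_split /=; congr (_ * _); apply: eq_bigr => k _.
rewrite intrD intrB mulrDr mulrBr mulr1 sinD sinB !exprS; ring.
Qed.

Lemma Ftrig_0 (R : realType) L e n : Ftrig R L e n 0 = 0.
Proof.
rewrite /Ftrig big1 ?mulr0 // => k _.
by rewrite mulr0 sin0 mulr0 mul0r.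
Qed.

Lemma Ftrig_L (R : realType) L e n : (0 < L)%N -> Ftrig R L e n L%:Z = 0.
Proof.
move=> L0; have L0' : (L%:R : R) != 0 by rewrite pnatr_eq0 -lt0n.
rewrite /Ftrig big1 ?mulr0 // => k _.
rewrite natzR (_ : pi * k%:R / L%:R * L%:R = pi * k%:R); last by field.
by rewrite sin_natpi mulr0 mul0r.
Qed.

Lemma Ftrig_base (R : realType) L e (a : nat) : (0 < a < L)%N -> (0 < e < L)%N ->
  Ftrig R L e 0 a%:Z = (a == e)%:R.
Proof.
move=> ha he; have L0' : (L%:R : R) != 0 by rewrite pnatr_eq0; lia.
rewrite /Ftrig; under eq_bigr do rewrite !expr0 !mul1r natzR.
by rewrite orth //; field.
Qed.

Lemma hc_trig (R : realType) L s e n (a : nat) : (2 <= L)%N ->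
  (s = 0 /\ e = 1%N \/ s = L%:Z /\ e = L.-1) -> (0 < a < L)%N ->
  (hc L s n.+1 a)%:R = Ftrig R L e n a%:Z.
Proof.
move=> L2 hs ha.
have he : (0 < e < L)%N by case: hs => -[_ ->]; lia.
apply: (@hc_sol R L s (Ftrig R L e) n) => //.
- by move=> b hb; rewrite Ftrig_base // (@hc1_e L s e b L2 hb hs).
- by move=> m _; rewrite Ftrig_0 Ftrig_L //; lia.
- exact: Ftrig_rec.
Qed.

Definition Tk (R : realType) (L e n a : nat) (k : nat) : R :=
  2 ^+ n * cos (pi * k%:R / L%:R) ^+ n
      * sin (pi * k%:R / L%:R * a%:R) * sin (pi * k%:R / L%:R * e%:R).

Lemma Tk_sym (R : realType) L e n a k : (0 < L)%N -> (k <= L)%N ->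
  ~~ odd (n + a + e) -> Tk R L e n a (L - k) = Tk R L e n a k.
Proof.
move=> L0 kL hp; have L0' : (L%:R : R) != 0 by rewrite pnatr_eq0 -lt0n.
rewrite /Tk; set y := pi * k%:R / L%:R.
have -> : pi * (L - k)%:R / L%:R = pi - y :> R by rewrite natrB // /y; field.
rewrite cosB cospi sinpi mul0r addr0 mulN1r !mulrBl !sinB !sin_natpi !cos_natpi.
rewrite !mul0r !sub0r (exprNn (cos y)).
have P : ((-1) ^+ n * (-1) ^+ a * (-1) ^+ e : R) = 1.
  by rewrite -!exprD -signr_odd (negbTE hp).
transitivity (2 ^+ n * cos y ^+ n * sin (y * a%:R) * sin (y * e%:R) *
  ((-1) ^+ n * (-1) ^+ a * (-1) ^+ e)); first ring.
by rewrite P mulr1.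
Qed.

Lemma trig_half (R : realType) L e n (a : nat) (r' : int) : (2 <= L)%N ->
  (0 < a < L)%N -> (0 < e < L)%N -> ~~ odd (n + a + e) -> (odd L || (0 < n)%N) ->
  (2 * r' + a%:Z - n%:Z = e%:Z) ->
  trig_sum L a n r' = Ftrig R L e n a%:Z.
Proof.
move=> L2 ha he hp hL hE.
have L0' : (L%:R : R) != 0 by rewrite pnatr_eq0; lia.
rewrite /trig_sum /Ftrig hE.
under eq_bigr do rewrite natzR.
under [in RHS]eq_bigr do rewrite natzR.
rewrite (_ : \sum_(i < L) _ = \sum_(i < L) Tk R L e n a i) //.
rewrite (_ : \sum_(i < ((L - 1)./2).+1) _ = \sum_(i < ((L - 1)./2).+1) Tk R L e n a i) //.
rewrite (half_sum (T := Tk R L e n a) (L := L)).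
- by rewrite mulrA; congr (_ * _); field.
- lia.
- by rewrite /Tk mulr0 !mul0r sin0 !mulr0.
- by move=> k hk; rewrite Tk_sym //; lia.
- move=> eL; have n0 : (0 < n)%N by move: hL; rewrite (negbTE eL).
  rewrite /Tk (_ : pi * (L./2)%:R / L%:R = pi / 2 :> R).
    by rewrite cos_pihalf expr0n gtn_eqF // mulr0 !mul0r.
  have -> : L = (L./2).*2 by rewrite -{1}(odd_double_half L) (negbTE eL) add0n.
  rewrite doubleK -mul2n natrM; field.
  rewrite pnatr_eq0; apply/eqP => h; move: L2; by rewrite -(odd_double_half L) h (negbTE eL).
Qed.

Lemma binz_neg n (k : int) : k < 0 -> binz n k = 0%N.
Proof. by case: k. Qed.

Lemma binz_pascal n (k : int) : binz n.+1 k = (binz n k + binz n (k - 1))%N.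
Proof.
case: k => [[|k]|k] /=.
- by rewrite ?bin0 ?binz_neg.
- by rewrite subn1 /= binS.
- by [].
Qed.

Lemma binz0 (k : int) : binz 0 k = (k == 0).
Proof. by case: k => [[|k]|k]. Qed.

Lemma binz_big n (k : int) : n%:Z < k -> binz n k = 0%N.
Proof.
case: k => [k|k] h /=; last by [].
by rewrite bin_small //; lia.
Qed.

Definition bt (R : realType) (L n : nat) (a r' : int) (i : int) : R :=
  (binz n (r' + i * L%:Z))%:R - (binz n ((r' + a) + i * L%:Z))%:R.

Definition Bs (R : realType) (L n N : nat) (a r' : int) : R :=
  \sum_(j < (2 * N).+1) bt R L n a r' (j%:Z - N%:Z).

Lemma bt_rec (R : realType) L n a r i :
  bt R L n.+1 a r i = bt R L n (a + 1) (r - 1) i + bt R L n (a - 1) r i.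
Proof.
rewrite /bt !binz_pascal !natrD.
have -> : r + i * L%:Z - 1 = r - 1 + i * L%:Z by ring.
have -> : r - 1 + (a + 1) = r + a by ring.
have -> : r + a + i * L%:Z - 1 = r + (a - 1) + i * L%:Z by ring.
ring.
Qed.

Lemma Bs_rec (R : realType) L n N a r :
  Bs R L n.+1 N a r = Bs R L n N (a + 1) (r - 1) + Bs R L n N (a - 1) r.
Proof. by rewrite /Bs -big_split; apply: eq_bigr => j _; rewrite bt_rec. Qed.

Lemma Bs_0 (R : realType) L n N r : Bs R L n N 0 r = 0.
Proof. by rewrite /Bs big1 // => j _; rewrite /bt addr0 subrr. Qed.

Lemma Bs_L (R : realType) L n N (r : int) : (2 <= L)%N -> (n < N)%N ->
  1 - L%:Z + n%:Z <= 2 * r -> 2 * r <= n%:Z - 1 -> Bs R L n N L%:Z r = 0.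
Proof.
move=> L2 nN h1 h2.
rewrite /Bs -(big_mkord xpredT (fun j => bt R L n L%:Z r (j%:Z - N%:Z))).
rewrite (@telescope_sumr_eq _ 0%N (2 * N).+1 (fun j : nat => - (binz n (r + (j%:Z - N%:Z) * L%:Z))%:R)) //.
  have NL : N%:Z <= N%:Z * L%:Z by rewrite -PoszM lez_nat leq_pmulr //; lia.
  rewrite binz_big; last first.
    have -> : (2 * N).+1%:Z - N%:Z = N%:Z + 1 by lia.
    rewrite mulrDl mul1r; lia.
  rewrite binz_neg; last first.
    have -> : 0%:Z - N%:Z = - N%:Z by lia.
    rewrite mulNr; lia.
  by rewrite oppr0 subrr.
move=> k _; rewrite /bt opprK.
have -> : r + L%:Z + (k%:Z - N%:Z) * L%:Z = r + (k.+1%:Z - N%:Z) * L%:Z.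
  have -> : k.+1%:Z = k%:Z + 1 by lia.
  ring.
by rewrite addrC.
Qed.

Definition Xb (R : realType) (L e N n : nat) (a : int) : R :=
  if ((e%:Z - a + n%:Z) %% 2 == 0)%Z
  then Bs R L n N a ((e%:Z - a + n%:Z) %/ 2)%Z else 0.

Lemma Xb_base (R : realType) L e N (a : nat) : (0 < a < L)%N -> (0 < e < L)%N ->
  Xb R L e N 0 a%:Z = (a == e)%:R.
Proof.
move=> ha he; rewrite /Xb; case: ifP => hp; last first.
  case: eqP => // ae; move/negbT/eqP: hp; rewrite ae; lia.
move/eqP: hp => hp.
set r := ((e%:Z - a%:Z + 0%:Z) %/ 2)%Z.
have h2r : 2 * r = e%:Z - a%:Z by rewrite /r; lia.
clearbody r.
rewrite /Bs /bt; under eq_bigr do rewrite !binz0.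
rewrite sumrB [X in _ - X]big1 ?subr0; last first.
  move=> j _; apply/eqP; rewrite pnatr_eq0 eqb0; apply/eqP => h.
  have : (j%:Z - N%:Z <= -1) \/ (0 <= j%:Z - N%:Z) by lia.
  case=> hj.
    have : (j%:Z - N%:Z) * L%:Z <= (-1) * L%:Z.
      by rewrite ler_wpM2r //; lia.
    rewrite mulN1r; lia.
  have : 0 <= (j%:Z - N%:Z) * L%:Z by apply: mulr_ge0 => //; lia.
  lia.
have hN : (N < (2 * N).+1)%N by lia.
rewrite (bigD1 (Ordinal hN)) //= big1 ?addr0; last first.
  move=> j hj; apply/eqP; rewrite pnatr_eq0 eqb0; apply/eqP => h.
  have jN : j%:Z - N%:Z != 0.
    apply/eqP => h0; move/eqP: hj; apply; apply: val_inj => /=; lia.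
  have : (j%:Z - N%:Z <= -1) \/ (1 <= j%:Z - N%:Z) by lia.
  case=> hj'.
    have : (j%:Z - N%:Z) * L%:Z <= (-1) * L%:Z.
      by rewrite ler_wpM2r //; lia.
    rewrite mulN1r; lia.
  have : 1 * L%:Z <= (j%:Z - N%:Z) * L%:Z.
    by rewrite ler_wpM2r //; lia.
  rewrite mul1r; lia.
rewrite subrr mul0r addr0; congr (_%:R); apply/eqP/eqP; lia.
Qed.

Lemma Xb_rec (R : realType) L e N n a :
  Xb R L e N n.+1 a = Xb R L e N n (a + 1) + Xb R L e N n (a - 1).
Proof.
rewrite /Xb; case: ifP => hp.
  move/eqP: hp => hp.
  rewrite ifT; last by apply/eqP; lia.
  rewrite ifT; last by apply/eqP; lia.
  rewrite Bs_rec; congr (Bs _ _ _ _ _ _ + Bs _ _ _ _ _ _); lia.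
move/negbT/eqP: hp => hp.
rewrite ifF; last by apply/negbTE/eqP; lia.
rewrite ifF; last by apply/negbTE/eqP; lia.
by rewrite addr0.
Qed.

Lemma hc_binom (R : realType) L s e N n (a : nat) : (2 <= L)%N ->
  (s = 0 /\ e = 1%N \/ s = L%:Z /\ e = L.-1) -> (n <= N)%N -> (0 < a < L)%N ->
  (hc L s n.+1 a)%:R = Xb R L e N n a%:Z.
Proof.
move=> L2 hs nN ha.
have he : (0 < e < L)%N by case: hs => -[_ ->]; lia.
apply: (@hc_sol R L s (Xb R L e N) N) => //.
- by move=> b hb; rewrite Xb_base // (@hc1_e L s e b L2 hb hs).
- move=> m mN; rewrite /Xb; split.
    by case: ifP => // _; rewrite Bs_0.
  case: ifP => // /eqP hp; apply: Bs_L => //; lia.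
- exact: Xb_rec.
Qed.

Lemma pos_count_seq s0 (w : seq bool) :
  pos s0 w (size w) = s0%:Z + 2 * (count id w)%:Z - (size w)%:Z.
Proof.
rewrite /pos take_size.
have := count_predC id w.
rewrite (eq_count (a2 := negb) (fun x => erefl _)) => h.
lia.
Qed.

Lemma pos_count s0 t (w : t.-tuple bool) :
  pos s0 w t = s0%:Z + 2 * (count id w)%:Z - t%:Z.
Proof. by have := pos_count_seq s0 w; rewrite size_tuple. Qed.

Lemma not_odd_mod x : (~~ odd x) = (x %% 2 == 0)%N.
Proof. by rewrite modn2; case: odd. Qed.

Lemma pos_eq_r s0 s t (w : t.-tuple bool) : ~~ odd (s + s0 + t) ->
  (pos s0 w t == s%:Z) = ((count id w)%:Z == r_st s0 s t).
Proof.
rewrite not_odd_mod => /eqP hp; rewrite pos_count /r_st.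
by apply/eqP/eqP; lia.
Qed.

Lemma a_paths_hc L s0 s t : ~~ odd (s + s0 + t) ->
  a_paths L s0 t (r_st s0 s t) = hc L s%:Z t s0.
Proof.
move=> hp; rewrite /a_paths /hc -sum1_card big_mkcond /=.
apply: eq_bigr => w _; rewrite inE /= (pos_eq_r _ hp) andbC.
by case: (_ && _).
Qed.

Lemma wsum_term (R : realType) L s0 (p : R) s t :
  \sum_(w : t.-tuple bool)
     (if first_hit L s0 w && (pos s0 w t == s%:Z) then weight p w else 0)
  = term L s0 p (s, t).
Proof.
rewrite /term /=; case: ifP => hodd.
  apply: big1 => w _; case: ifP => // /andP[_ /eqP]; rewrite pos_count => h.
  have : ((s + s0 + t) %% 2 = 1)%N by rewrite modn2 hodd.
  lia.
rewrite a_paths_hc ?hodd // /hc natr_sum mulr_sumr; apply: eq_bigr => w _.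
case: ifP => P /=; last by rewrite mulr0.
rewrite mulr1; case/andP: P => _ /eqP; rewrite pos_count => h.
have hr : r_st s0 s t = (count id w)%:Z.
  move: hodd => /negbT; rewrite not_odd_mod => /eqP hp; rewrite /r_st; lia.
have ct : (count id w <= t)%N by have := count_size id w; rewrite size_tuple.
have cn : count negb w = (t - count id w)%N.
  have := count_predC id w; rewrite size_tuple.
  rewrite (eq_count (a2 := negb) (fun x => erefl _)); lia.
rewrite hr /weight cn -exprnP (_ : t%:Z - (count id w)%:Z = (t - count id w)%N%:Z).
  by rewrite -exprnP mulrC.
by rewrite subzn.
Qed.

Lemma prob_split (R : realType) L s0 (p lam0 lamL g : R) t :
  (2 <= L)%N -> (0 < s0 < L)%N ->
  prob_term_at L s0 p lam0 lamL g t =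
  \sum_(s <- [:: 0%N; L])
     (if `[< Cg L lam0 lamL g (s, t) >] then term L s0 p (s, t) else 0).
Proof.
move=> L2 hs0; rewrite /prob_term_at big_mkcond /=.
transitivity (\sum_(w : t.-tuple bool) \sum_(s <- [:: 0%N; L])
   (if first_hit L s0 w && (pos s0 w t == s%:Z) && (lam lam0 lamL s%:Z - t%:R == g)
    then weight p w else 0)).
  apply: eq_bigr => w _; rewrite big_cons big_seq1.
  case fh: (first_hit L s0 w) => /=; last by rewrite addr0.
  have : terminal L (pos s0 w t).
    by move: fh; rewrite first_hitE size_tuple => /andP[].
  rewrite /terminal => /orP[/eqP->|/eqP->].
    have -> : (0 == L%:Z) = false by apply/negbTE/eqP; lia.
    by rewrite eqxx /= addr0.
  have -> : (L%:Z == 0%N%:Z) = false by apply/negbTE/eqP; lia.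
  by rewrite eqxx /= add0r.
rewrite exchange_big /=; apply: eq_big_seq => s hs.
case: asboolP => hC.
  case: hC => _ [_ hg].
  rewrite -wsum_term; apply: eq_bigr => w _.
  by rewrite -hg eqxx andbT.
apply: big1 => w _; case: ifP => // /andP[/andP[fh _] /eqP hg]; exfalso.
apply: hC; split.
  by move: hs; rewrite !inE => /orP[/eqP->|/eqP->]; [left|right].
split; last by rewrite hg.
case: t w fh {hg} => // w; rewrite first_hitE size_tuple /= pos0 /terminal.
by move/orP => [/eqP|/eqP]; lia.
Qed.

Lemma Cg_bound (R : realType) L (lam0 lamL g : R) :
  exists N, forall s t, Cg L lam0 lamL g (s, t) -> (t < N)%N.
Proof.
have uq : forall s t1 t2, Cg L lam0 lamL g (s, t1) -> Cg L lam0 lamL g (s, t2) -> t1 = t2.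
  move=> s t1 t2 [_ [_ h1]] [_ [_ h2]]; apply/eqP; rewrite -(eqr_nat R).
  by apply/eqP; move: h1 h2 => /= -> h; lra.
have bs : forall s, exists Ns, forall t, Cg L lam0 lamL g (s, t) -> (t < Ns)%N.
  move=> s; have [[t0 h0]|h0] := pselect (exists t, Cg L lam0 lamL g (s, t)).
    by exists t0.+1 => t ht; rewrite (uq _ _ _ ht h0).
  by exists 0%N => t ht; exfalso; apply: h0; exists t.
have [N0 h0] := bs 0%N; have [NL hL] := bs L.
exists (N0 + NL)%N => s t ht; have := ht; case => -[] /= hs _; rewrite hs in ht.
  by have := h0 _ ht; lia.
by have := hL _ ht; lia.
Qed.

Lemma part1 (R : realType) (L s0 : nat) (p lam0 lamL : R) :
  (2 <= L)%N -> (0 < s0 < L)%N -> forall g : R,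
     series (prob_term_at L s0 p lam0 lamL g) @ \oo -->
       (\sum_(st \in Cg L lam0 lamL g) term L s0 p st).
Proof.
move=> L2 hs0 g; have [N HN] := Cg_bound L lam0 lamL g.
apply: cvg_near_cst; apply: filterS (nbhs_infty_ge N) => n Nn.
set F := fun st => if `[< Cg L lam0 lamL g st >] then term L s0 p st else 0.
rewrite (eq_fsbigr F); last by move=> st; rewrite inE /F => hC; rewrite asboolT.
set r := [seq (s, t) | s <- [:: 0%N; L], t <- iota 0 n].
rewrite (fsbig_fwiden r) //.
- rewrite big_allpairs seriesEnat /=.
  under eq_bigr do rewrite prob_split //.
  rewrite exchange_big /= /index_iota subn0.
  by apply: eq_bigr => s _; apply: eq_bigr => t _; rewrite /F.
- move=> [s t] hC; have := HN _ _ hC => tn.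
  rewrite /= /r; apply: allpairs_f.
    by case: hC => -[] /= -> _; rewrite !inE eqxx ?orbT.
  by rewrite mem_iota /=; lia.
- rewrite allpairs_uniq //=.
    by rewrite inE andbT; apply/eqP; lia.
  by rewrite iota_uniq.
  by move=> [? ?] [? ?] _ _ /=.
- move=> [s t] [_ hC] /=; rewrite /F asboolF //.
Qed.

Lemma part2 (R : realType) (L s0 : nat) :
  (2 <= L)%N -> (1 <= s0)%N -> (s0 <= L - 1)%N ->
  (forall s t : nat, (s = 0%N \/ s = L) -> (1 <= t)%N -> ~~ odd (s + s0 + t) ->
     zsum_to (binom_term (R:=R) L s0 t.-1 (r'_st s0 s t))
             (a_paths L s0 t (r_st s0 s t))%:R
     /\ ((odd L || (2 <= t)%N) ->
         (a_paths L s0 t (r_st s0 s t))%:R = trig_sum L s0 t.-1 (r'_st s0 s t) :> R)).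
Proof.
move=> L2 hs1 hs2 s t hs ht hp.
have ha : (0 < s0 < L)%N by lia.
rewrite (a_paths_hc L hp).
case: t ht hp => [|n] // _ hp /=.
set e := if s == 0%N then 1%N else L.-1.
have hs' : (s%:Z = 0 /\ e = 1%N \/ s%:Z = L%:Z /\ e = L.-1).
  rewrite /e; case: hs => ->; [left | right] => //.
  by rewrite ifF //; apply/negbTE/eqP; lia.
have he : (0 < e < L)%N by case: hs' => -[_ ->]; lia.
move: (hp); rewrite not_odd_mod => /eqP hp'.
have hr : r'_st s0 s n.+1 = ((e%:Z - s0%:Z + n%:Z) %/ 2)%Z.
  rewrite /r'_st /r_st /e; case: hs => hs; rewrite hs /=.
    lia.
  rewrite ifF; last by apply/negbTE/eqP; lia.
  rewrite ifF; last by apply/negbTE/eqP; lia.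
  lia.
have hpar : ((e%:Z - s0%:Z + n%:Z) %% 2 == 0)%Z.
  by apply/eqP; rewrite /e; case: hs => hs; rewrite hs /=; [|rewrite ifF; [|apply/negbTE/eqP]]; lia.
split.
  rewrite /zsum_to; apply: cvg_near_cst; apply: filterS (nbhs_infty_ge n) => N nN.
  rewrite (@hc_binom R L s%:Z e N n s0 L2 hs' nN ha) /Xb hpar hr.
  by [].
move=> hL; rewrite (@hc_trig R L s%:Z e n s0 L2 hs' ha).
symmetry; apply: trig_half => //.
- move: hpar => /eqP; rewrite not_odd_mod; lia.
- by move: hL; case: (odd L) => //=; lia.
Qed.

Unset Implicit Arguments.
Set Strict Implicit.

Theorem theorem1 (R : realType) (L s0 : nat) (p lam0 lamL : R) :
  (2 <= L)%N -> (1 <= s0)%N -> (s0 <= L - 1)%N -> 0 <= p <= 1 ->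
  (forall g : R,
     series (prob_term_at L s0 p lam0 lamL g) @ \oo -->
       (\sum_(st \in Cg L lam0 lamL g) term L s0 p st))
  /\
  (forall s t : nat, (s = 0%N \/ s = L) -> (1 <= t)%N -> ~~ odd (s + s0 + t) ->
     zsum_to (binom_term (R:=R) L s0 t.-1 (r'_st s0 s t))
             (a_paths L s0 t (r_st s0 s t))%:R
     /\ ((odd L || (2 <= t)%N) ->
         (a_paths L s0 t (r_st s0 s t))%:R = trig_sum L s0 t.-1 (r'_st s0 s t) :> R)).
Proof.
move=> L2 hs1 hs2 _; split.
  by apply: part1 => //; lia.
exact: part2.
Qed.
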